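(* Let $n\in\{6,10,12\}$ and $V_0=\{v\in\{-1,1\}^n : v_1=1,\ \sum_i v_i=0\}$. Then there exist signs $\varepsilon_v\in\{-1,1\}$, $v\in V_0$, such that $\sum_{v\in V_0}\varepsilon_v v=0$. *)

(* Defs.v *)
From mathcomp Require Import all_boot all_order all_algebra.
Set Implicit Arguments. Unset Strict Implicit. Unset Printing Implicit Defensive.
Import GRing.Theory Num.Theory.
Local Open Scope ring_scope.

(* A vector v in {-1,1}^n is encoded by b : {ffun 'I_n -> bool},
   with coordinate i equal to sgnb (b i) : int, where true |-> 1, false |-> -1. *)
Definition sgnb (x : bool) : int := if x then 1 else -1.

Definition pmvec (n : nat) (b : {ffun 'I_n -> bool}) : 'rV[int]_n :=
  \row_(i < n) sgnb (b i).

(* V_0 = { v in {-1,1}^n : v_1 = 1, sum_i v_i = 0 } (first coordinate = index 0). *)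
Definition V0 (n : nat) : {set {ffun 'I_n -> bool}} :=
  [set b : {ffun 'I_n -> bool} | [forall i : 'I_n, (val i == 0%N) ==> b i] &&
           (\sum_(i < n) sgnb (b i) == 0)].

(* Main.v *)
Require Import Defs.
From mathcomp Require Import all_boot all_order all_algebra.
Import GRing.Theory Num.Theory.
Local Open Scope ring_scope.

Fixpoint allbools (n : nat) : seq (seq bool) :=
  if n is n'.+1 then [seq true :: l | l <- allbools n'] ++ [seq false :: l | l <- allbools n']
  else [:: [::]].

Lemma allbools_size n l : l \in allbools n -> size l = n.
Proof.
elim: n l => [|n IH] l /=; first by rewrite inE => /eqP ->.
by rewrite mem_cat => /orP[] /mapP[l' /IH <- ->].
Qed.

Lemma allbools_mem n l : size l = n -> l \in allbools n.
Proof.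
elim: n l => [|n IH] [|b l] //= [hs]; rewrite mem_cat.
by case: b; apply/orP; [left|right]; apply/mapP; exists l => //; apply: IH.
Qed.

Arguments allbools_size {n l}.
Arguments allbools_mem {n l}.

Lemma allbools_uniq n : uniq (allbools n).
Proof.
elim: n => //= n IH; rewrite cat_uniq !map_inj_uniq //=; try by move=> ?? [].
rewrite IH /= andbT; apply/hasPn => x /mapP[l _ ->]; apply/negP => /mapP[l' _] //.
Qed.

Definition mk n (l : seq bool) : {ffun 'I_n -> bool} := [ffun i : 'I_n => nth false l (nat_of_ord i)].
Definition lof {n} (v : {ffun 'I_n -> bool}) : seq bool := [seq v i | i <- enum 'I_n].

Lemma mk_lof n (v : {ffun 'I_n -> bool}) : mk n (lof v) = v.
Proof.
apply/ffunP => i; rewrite ffunE /lof (nth_map i); last by rewrite size_enum_ord.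
by rewrite nth_ord_enum.
Qed.

Lemma lof_mk n l : size l = n -> lof (mk n l) = l.
Proof.
move=> hs; rewrite /lof.
have -> : [seq mk n l i | i <- enum 'I_n] = [seq nth false l i | i <- map val (enum 'I_n)].
  by rewrite -map_comp; apply: eq_map => i /=; rewrite ffunE.
by rewrite val_enum_ord -hs -/(mkseq _ _) mkseq_nth.
Qed.

Arguments lof_mk {n l}.

Lemma sum_ffun n (G : {ffun 'I_n -> bool} -> 'rV[int]_n) :
  \sum_(v : {ffun 'I_n -> bool}) G v = \sum_(l <- allbools n) G (mk n l).
Proof.
rewrite -(big_map (mk n) xpredT).
apply: perm_big; apply: uniq_perm.
- exact: index_enum_uniq.
- rewrite map_inj_in_uniq ?allbools_uniq // => l1 l2 h1 h2 e.
  by rewrite -(lof_mk (allbools_size h1)) -(lof_mk (allbools_size h2)) e.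
- move=> v; rewrite mem_index_enum; symmetry; apply/mapP; exists (lof v); last by rewrite mk_lof.
  by apply: allbools_mem; rewrite size_map size_enum_ord.
Qed.

Definition sumb (l : seq bool) : int := foldr (fun b acc => sgnb b + acc) 0 l.
Definition cond (l : seq bool) : bool := nth false l 0 && (sumb l == 0).

Lemma sumb_big l : sumb l = \sum_(x <- l) sgnb x.
Proof. by elim: l => [|b l IH]; rewrite ?big_nil ?big_cons //= IH. Qed.

Lemma V0_mk n l : size l = n.+1 -> (mk n.+1 l \in V0 n.+1) = cond l.
Proof.
move=> hs; rewrite inE /cond; congr andb.
  apply/forallP/idP => [h | h i]; first by have := h ord0; rewrite /= ffunE.
  by apply/implyP => /eqP hi; rewrite ffunE hi.
congr (_ == 0); rewrite sumb_big (big_nth false) hs big_mkord.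
by apply: eq_bigr => i _; rewrite ffunE.
Qed.

Arguments V0_mk {n l}.

Definition adj (m : nat) (t : seq bool) : nat :=
  count (fun i => nth false t i && nth false t (i.+1 %% m)) (iota 0 m).
Definition Prule (m : nat) (l : seq bool) : bool :=
  let a := adj m (behead l) in if m == 11 then (a == 2) || (a == 4) else ~~ odd a.
Definition epsl (m : nat) (l : seq bool) : int := if Prule m l then 1 else -1.
Definition T (m : nat) (l : seq bool) (j : nat) : int :=
  if cond l then epsl m l * sgnb (nth false l j) else 0.
Definition check (m : nat) : bool :=
  all (fun j => foldr (fun l acc => T m l j + acc) 0 (allbools m.+1) == 0) (iota 0 m.+1).

Lemma foldr_big (s : seq (seq bool)) (F : seq bool -> int) :
  \sum_(x <- s) F x = foldr (fun x acc => F x + acc) 0 s.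
Proof. by elim: s => [|b l IH]; rewrite ?big_nil ?big_cons //= IH. Qed.

Lemma general m : check m ->
  exists eps : {ffun 'I_m.+1 -> bool} -> int,
    (forall v, v \in V0 m.+1 -> eps v = 1 \/ eps v = -1) /\
    \sum_(v in V0 m.+1) eps v *: pmvec v = 0.
Proof.
move=> hc; exists (fun v => epsl m (lof v)); split.
  by move=> v _; rewrite /epsl; case: ifP; [left|right].
rewrite big_mkcond /= sum_ffun; apply/rowP => j; rewrite summxE mxE.
rewrite big_seq.
under eq_bigr => l hl.
  rewrite (V0_mk (allbools_size hl)) (lof_mk (allbools_size hl)).
  have -> : (if cond l then epsl m l *: pmvec (mk m.+1 l) else 0) 0 j = T m l j.
    by rewrite /T; case: ifP => _; rewrite !mxE // ffunE.
  over.
rewrite -big_seq foldr_big.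
by move/allP: hc => /(_ j); rewrite mem_iota /= add0n ltn_ord => /(_ isT) /eqP.
Qed.

Lemma c5 : check 5. Proof. vm_compute. reflexivity. Qed.
Lemma c9 : check 9. Proof. vm_compute. reflexivity. Qed.
Lemma c11 : check 11. Proof. vm_compute. reflexivity. Qed.

Theorem lemmaA1 (n : nat) (hn : n \in [:: 6%N; 10%N; 12%N]) :
  exists eps : {ffun 'I_n -> bool} -> int,
    (forall v, v \in V0 n -> eps v = 1 \/ eps v = -1) /\
    \sum_(v in V0 n) eps v *: pmvec v = 0.
Proof.
rewrite !inE in hn; case/or3P: hn => /eqP ->.
- exact: general c5.
- exact: general c9.
- exact: general c11.
Qed.
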